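(* Let $\mathcal R$ be a partial $Z$-regulus and let $E\in\mathcal R$. Then the assignment $L\mapsto L\cap E$ is a bijection from the set of directrices of $\mathcal R$ onto the set of points of $E$. Consequently, each point of $E$ lies on a unique directrix of $\mathcal R$.
   Context: $K$ is a (not necessarily commutative) field with centre $Z$, and $V$ is a left vector space over $K$ of arbitrary (possibly infinite) dimension with $\dim V>2$. $\mathcal G:=\{X\le V\mid X\cong V/X\}$, assumed nonempty. Points are $1$-dimensional and lines are $2$-dimensional subspaces of $V$; two subspaces meet if they have a common point. Two elements $X,Y\in\mathcal G$ are distant if $V=X\oplus Y$. A partial $Z$-regulus is a subset $\mathcal R\subseteq\mathcal G$ such that (R1) the elements of $\mathcal R$ are mutually distant and $|\mathcal R|\ge 3$, and (R2) whenever a line meets three mutually distinct elements of $\mathcal R$, it meets all elements of $\mathcal R$. A directrix of $\mathcal R$ is a line meeting all elements of $\mathcal R$. *)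

(* Defs.v *)
(* K is a division ring (unitRingType in which every nonzero
   element is a unit), V a left K-module (lmodType K) = left vector space. *)
From mathcomp Require Import all_boot all_algebra.
Set Implicit Arguments. Unset Strict Implicit. Unset Printing Implicit Defensive.
Import GRing.Theory.
Local Open Scope ring_scope.

Section ProjDefs.
Variables (K : unitRingType) (V : lmodType K).

Definition division_ring := forall x : K, x != 0 -> x \is a GRing.unit.

Definition dim_gt2 := exists u v w : V,
  forall a b c : K, a *: u + b *: v + c *: w = 0 -> [/\ a = 0, b = 0 & c = 0].

Definition subspace (X : V -> Prop) :=
  [/\ X 0, (forall x y, X x -> X y -> X (x + y)) & (forall (a : K) x, X x -> X (a *: x))].

Definition klinear (f : V -> V) := forall (a : K) x y, f (a *: x + y) = a *: f x + f y.

(* X is isomorphic to V/X: by the first isomorphism theorem, iff there is a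
   K-linear map V -> V with image X and kernel X. *)
Definition inG (X : V -> Prop) :=
  subspace X /\ exists f : V -> V, [/\ klinear f,
     (forall y, X y <-> exists x, f x = y) & (forall x, f x = 0 <-> X x)].

Definition point (P : V -> Prop) :=
  exists v : V, v != 0 /\ P = (fun x => exists a : K, x = a *: v).

Definition indep2 (u w : V) := forall a b : K, a *: u + b *: w = 0 -> a = 0 /\ b = 0.

Definition line (L : V -> Prop) :=
  exists u w : V, indep2 u w /\ L = (fun x => exists a b : K, x = a *: u + b *: w).

Definition meets (X Y : V -> Prop) :=
  exists P, [/\ point P, (forall x, P x -> X x) & (forall x, P x -> Y x)].

Definition distant (X Y : V -> Prop) :=
  (forall x, X x -> Y x -> x = 0) /\
  (forall v, exists x y, [/\ X x, Y y & v = x + y]).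

Definition partial_regulus (R : (V -> Prop) -> Prop) :=
  [/\ (forall X, R X -> inG X),
      (forall X Y, R X -> R Y -> X <> Y -> distant X Y),
      (exists X1 X2 X3, [/\ R X1, R X2, R X3 & [/\ X1 <> X2, X1 <> X3 & X2 <> X3]]) &
      (forall L, line L -> forall X1 X2 X3, R X1 -> R X2 -> R X3 ->
         X1 <> X2 -> X1 <> X3 -> X2 <> X3 ->
         meets L X1 -> meets L X2 -> meets L X3 ->
         forall X, R X -> meets L X)].

Definition directrix (R : (V -> Prop) -> Prop) (L : V -> Prop) :=
  line L /\ forall X, R X -> meets L X.

Definition capS (X Y : V -> Prop) : V -> Prop := fun x => X x /\ Y x.

End ProjDefs.

(* Main.v *)
Require Import Defs.
From mathcomp Require Import all_boot all_algebra.
From Stdlib Require Import Classical FunctionalExtensionality PropExtensionality.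
Set Implicit Arguments. Unset Strict Implicit. Unset Printing Implicit Defensive.
Import GRing.Theory.
Local Open Scope ring_scope.

Lemma pred_ext (T : Type) (P Q : T -> Prop) : (forall x, P x <-> Q x) -> P = Q.
Proof. move=> h; apply: functional_extensionality => x; apply: propositional_extensionality; exact: h. Qed.

Lemma scale_eq0 (K : unitRingType) (V : lmodType K) (hK : division_ring K) (a : K) (v : V) :
  a *: v = 0 -> v != 0 -> a = 0.
Proof.
move=> h nv; case: (eqVneq a 0) => // an; exfalso; move/eqP: nv; apply.
by rewrite -[v]scale1r -(mulVr (hK a an)) -scalerA h scaler0.
Qed.

Definition span2 (K : unitRingType) (V : lmodType K) (p q : V) : V -> Prop :=
  fun x => exists a b : K, x = a *: p + b *: q.
Definition span1 (K : unitRingType) (V : lmodType K) (v : V) : V -> Prop :=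
  fun x => exists a : K, x = a *: v.

Lemma subspace_opp {K : unitRingType} {V : lmodType K} (S : V -> Prop) x : subspace S -> S x -> S (- x).
Proof. case=> _ _ hs hx; rewrite -scaleN1r; exact: hs. Qed.
Lemma subspace_add {K : unitRingType} {V : lmodType K} (S : V -> Prop) x y : subspace S -> S x -> S y -> S (x + y).
Proof. by case=> _ hs _; apply: hs. Qed.
Lemma subspace_scale {K : unitRingType} {V : lmodType K} (S : V -> Prop) a x : subspace S -> S x -> S (a *: x).
Proof. by case=> _ _ hs; apply: hs. Qed.
Lemma subspace_sub {K : unitRingType} {V : lmodType K} (S : V -> Prop) x y : subspace S -> S x -> S y -> S (x - y).
Proof. move=> hS hx hy; apply: subspace_add => //; exact: subspace_opp. Qed.
Lemma subspace_comb {K : unitRingType} {V : lmodType K} (S : V -> Prop) x y a b : subspace S -> S x -> S y -> S (a*:x + b*:y).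
Proof. move=> hS hx hy; apply: subspace_add => //; exact: subspace_scale. Qed.

Lemma span2_subspace {K : unitRingType} {V : lmodType K} (p q : V) : subspace (span2 p q).
Proof.
split.
- by exists 0, 0; rewrite !scale0r addr0.
- move=> x y [a [b ->]] [c [d ->]]; exists (a+c), (b+d); by rewrite !scalerDl addrACA.
- move=> c x [a [b ->]]; exists (c*a), (c*b); by rewrite scalerDr !scalerA.
Qed.
Lemma span2_min {K : unitRingType} {V : lmodType K} (S : V -> Prop) (p q x : V) : subspace S -> S p -> S q -> span2 p q x -> S x.
Proof. move=> hS hp hq [a [b ->]]; exact: subspace_comb. Qed.
Lemma span1_min {K : unitRingType} {V : lmodType K} (S : V -> Prop) (v x : V) : subspace S -> S v -> span1 v x -> S x.
Proof. move=> hS hv [a ->]; exact: subspace_scale. Qed.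
Lemma span2_l {K : unitRingType} {V : lmodType K} (p q : V) : span2 p q p.
Proof. by exists 1, 0; rewrite scale1r scale0r addr0. Qed.
Lemma span2_r {K : unitRingType} {V : lmodType K} (p q : V) : span2 p q q.
Proof. by exists 0, 1; rewrite scale1r scale0r add0r. Qed.
Lemma span1_self {K : unitRingType} {V : lmodType K} (v : V) : span1 v v.
Proof. by exists 1; rewrite scale1r. Qed.
Lemma line_subspace {K : unitRingType} {V : lmodType K} (L : V -> Prop) : line L -> subspace L.
Proof. case=> u [w [_ ->]]; exact: span2_subspace. Qed.

Lemma indep2_nz {K : unitRingType} {V : lmodType K} (p q : V) : indep2 p q -> p != 0 /\ q != 0.
Proof.
move=> h; split; apply/eqP => e.
- have [h1 _] : (1:K) = 0 /\ (0:K) = 0 by apply: h; rewrite e scaler0 scale0r addr0.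
  by move: (oner_neq0 K); rewrite h1 eqxx.
- have [_ h1] : (0:K) = 0 /\ (1:K) = 0 by apply: h; rewrite e scaler0 scale0r addr0.
  by move: (oner_neq0 K); rewrite h1 eqxx.
Qed.

Lemma span2_basis (K : unitRingType) (V : lmodType K) (hK : division_ring K) (p q u w : V) :
  indep2 p q -> span2 u w p -> span2 u w q -> span2 p q u /\ span2 p q w.
Proof.
move=> hi [a [b ep]] [c [d eq]].
have [np nq] := indep2_nz hi.
have hS := span2_subspace p q.
have Sp := span2_l p q; have Sq := span2_r p q.
have one0 : (1 : K) != 0 := oner_neq0 K.
case: (eqVneq a 0) => [a0|an].
- rewrite a0 scale0r add0r in ep.
  have bn : b != 0.
    apply/eqP => b0; move/eqP: np; apply; by rewrite ep b0 scale0r.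
  have ew : w = b^-1 *: p by rewrite ep scalerA mulVr ?scale1r //; exact: hK.
  have Sw : span2 p q w by rewrite ew; exact: subspace_scale.
  have cn : c != 0.
    apply/eqP => c0; rewrite c0 scale0r add0r in eq.
    have [_ h1] : (d * b^-1) = 0 /\ (-1 : K) = 0.
      apply: hi; by rewrite eq ew scaleN1r scalerA subrr.
    by move: one0; rewrite -oppr_eq0 h1 eqxx.
  split => //.
  have eu : u = c^-1 *: (q - d *: w).
    by rewrite eq addrK scalerA mulVr ?scale1r //; exact: hK.
  rewrite eu; apply: subspace_scale => //; apply: subspace_sub => //; exact: subspace_scale.
- have ua := hK a an.
  set d' := d - c * a^-1 * b.
  have key : q - (c * a^-1) *: p = d' *: w.
    rewrite eq ep scalerDr !scalerA mulrVK // scalerBl opprD addrACA subrr add0r //.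
  have dn : d' != 0.
    apply/eqP => d0; rewrite d0 scale0r in key.
    have [_ h1] : - (c * a^-1) = 0 /\ (1 : K) = 0.
      by apply: hi; rewrite scale1r addrC scaleNr.
    by move: one0; rewrite h1 eqxx.
  have ew : w = d'^-1 *: (q - (c * a^-1) *: p).
    by rewrite key scalerA mulVr ?scale1r //; exact: hK.
  have Sw : span2 p q w.
    rewrite ew; apply: subspace_scale => //; apply: subspace_sub => //; exact: subspace_scale.
  split => //.
  have eu : u = a^-1 *: (p - b *: w) by rewrite ep addrK scalerA mulVr ?scale1r.
  rewrite eu; apply: subspace_scale => //; apply: subspace_sub => //; exact: subspace_scale.
Qed.

Lemma span2_in (K : unitRingType) (V : lmodType K) (hK : division_ring K) (p q u w x : V) :
  indep2 p q -> span2 u w p -> span2 u w q -> span2 u w x -> span2 p q x.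
Proof.
move=> hi hp hq; have [Su Sw] := span2_basis hK hi hp hq.
exact: span2_min (span2_subspace p q) Su Sw.
Qed.

Lemma point_span1 (K : unitRingType) (V : lmodType K) (P : V -> Prop) :
  point P -> exists v, [/\ v != 0, P v & P = span1 v].
Proof. case=> v [nv eP]; exists v; split => //; rewrite eP; exact: span1_self. Qed.

Lemma point_sub_eq (K : unitRingType) (V : lmodType K) (hK : division_ring K) (P Q : V -> Prop) :
  point P -> point Q -> (forall x, P x -> Q x) -> P = Q.
Proof.
move=> /point_span1 [v [nv Pv eP]] /point_span1 [w [nw Qw eQ]] hPQ.
have [a ea] : span1 w v by rewrite -eQ; exact: hPQ.
have an : a != 0 by apply/eqP => a0; move/eqP: nv; apply; rewrite ea a0 scale0r.
apply: pred_ext => x; split; first exact: hPQ.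
rewrite eQ eP => -[b ->]; exists (b * a^-1).
by rewrite ea scalerA mulrVK //; exact: hK.
Qed.

Lemma indep_dist (K : unitRingType) (V : lmodType K) (hK : division_ring K) (F G : V -> Prop) (y z : V) :
  (forall x, F x -> G x -> x = 0) -> subspace F -> subspace G -> F y -> G z -> y != 0 -> z != 0 ->
  indep2 y z.
Proof.
move=> hFG sF sG Fy Gz ny nz a b e.
have e2 : a *: y = (-b) *: z by rewrite scaleNr; apply/eqP; rewrite -subr_eq0 opprK e.
have h0 : a *: y = 0 by apply: hFG; [exact: subspace_scale | rewrite e2; exact: subspace_scale].
split; first exact: (scale_eq0 hK h0 ny).
apply/eqP; rewrite -oppr_eq0; apply/eqP; exact: (scale_eq0 hK (etrans (esym e2) h0) nz).
Qed.

Lemma dist_uniq (K : unitRingType) (V : lmodType K) (F G : V -> Prop) (f1 f2 g1 g2 : V) :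
  (forall x, F x -> G x -> x = 0) -> subspace F -> subspace G -> F f1 -> F f2 -> G g1 -> G g2 ->
  f1 + g1 = f2 + g2 -> f1 = f2 /\ g1 = g2.
Proof.
move=> hFG sF sG F1 F2 G1 G2 e.
have e1 : f1 - f2 = g2 - g1.
  by rewrite -[f1](addrK g1) e addrC addrA addKr.
have h : f1 - f2 = 0 by apply: hFG; [exact: subspace_sub | rewrite e1; exact: subspace_sub].
split; first by apply/eqP; rewrite -subr_eq0 h.
by apply/eqP; rewrite eq_sym -subr_eq0 -e1 h.
Qed.

Lemma two_others (T : Type) (R : T -> Prop) (E X1 X2 X3 : T) :
  R X1 -> R X2 -> R X3 -> X1 <> X2 -> X1 <> X3 -> X2 <> X3 ->
  exists F G, [/\ R F, R G, F <> E, G <> E & F <> G].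
Proof.
move=> h1 h2 h3 n12 n13 n23.
case: (classic (E = X1)) => [->|e1].
  by exists X2, X3; split => //; apply: nesym.
case: (classic (E = X2)) => [->|e2].
  by exists X1, X3; split => //; apply: nesym.
by exists X1, X2; split => //; apply: nesym.
Qed.

Lemma part1 (K : unitRingType) (V : lmodType K) (hK : division_ring K)
  (R : (V -> Prop) -> Prop) (hR : partial_regulus R) (E : V -> Prop) (hE : R E) L :
  directrix R L -> point (capS L E).
Proof.
case: hR => hRG hdist [X1 [X2 [X3 [h1 h2 h3 [n12 n13 n23]]]]] _.
have [F [G [hF _ nFE _ _]]] := two_others E h1 h2 h3 n12 n13 n23.
case=> hL hmeet.
have sL := line_subspace hL; have sE := (hRG E hE).1.
have [P [/point_span1 [v [nv Pv eP]] PL PE]] := hmeet E hE.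
exists v; split => //; apply: pred_ext => x; split.
- case=> Lx Ex; apply: NNPP => nx.
  have hi : indep2 v x.
    move=> a b e; case: (eqVneq b 0) => [b0|bn].
      rewrite b0 scale0r addr0 in e; split => //; exact: (scale_eq0 hK e nv).
    exfalso; apply: nx; exists (- (b^-1 * a)).
    have ebx : b *: x = - (a *: v) by apply/eqP; rewrite -subr_eq0 opprK addrC e.
    by rewrite -[x]scale1r -(mulVr (hK b bn)) -scalerA ebx scalerN scalerA scaleNr.
  have [Q [/point_span1 [y [ny Qy eQ]] QL QF]] := hmeet F hF.
  case: hL (PL v Pv) Lx (QL y Qy) => u [w [_ eL]]; rewrite eL => Lv Lx' Ly.
  have Sy : span2 v x y := span2_in hK hi Lv Lx' Ly.
  have Ey : E y := span2_min sE (PE v Pv) Ex Sy.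
  have := (hdist E F hE hF (nesym nFE)).1 y Ey (QF y Qy).
  by move/eqP: ny.
- case=> a ->; split; apply: subspace_scale => //; [exact: PL | exact: PE].
Qed.

Lemma inj_half (K : unitRingType) (V : lmodType K) (hK : division_ring K)
  (R : (V -> Prop) -> Prop) (hR : partial_regulus R) (E F G : V -> Prop)
  (hE : R E) (hF : R F) (hG : R G) (nFE : F <> E) (nGE : G <> E) (nFG : F <> G)
  L1 L2 (v : V) : directrix R L1 -> directrix R L2 -> v != 0 -> L1 v -> L2 v -> E v ->
  forall x, L1 x -> L2 x.
Proof.
case: hR => hRG hdist _ _.
move=> [hL1 m1] [hL2 m2] nv L1v L2v Ev.
have sF := (hRG F hF).1; have sG := (hRG G hG).1; have sE := (hRG E hE).1.
have sL2 := line_subspace hL2.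
have dFG := (hdist F G hF hG nFG).
have dEF := (hdist E F hE hF (nesym nFE)).1.
have dEG := (hdist E G hE hG (nesym nGE)).1.
have [P [/point_span1 [y1 [ny1 Py1 _]] P1L P1F]] := m1 F hF.
have [Q [/point_span1 [z1 [nz1 Qz1 _]] Q1L Q1G]] := m1 G hG.
have [P' [/point_span1 [y2 [ny2 Py2 _]] P2L P2F]] := m2 F hF.
have [Q' [/point_span1 [z2 [nz2 Qz2 _]] Q2L Q2G]] := m2 G hG.
have Fy1 := P1F y1 Py1; have Gz1 := Q1G z1 Qz1.
have Fy2 := P2F y2 Py2; have Gz2 := Q2G z2 Qz2.
have i1 := indep_dist hK dFG.1 sF sG Fy1 Gz1 ny1 nz1.
have i2 := indep_dist hK dFG.1 sF sG Fy2 Gz2 ny2 nz2.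
have sub1 : forall x, L1 x -> span2 y1 z1 x.
  move=> x; case: hL1 (P1L y1 Py1) (Q1L z1 Qz1) => u [w [_ ->]] Ly Lz Lx.
  exact: (@span2_in K V hK y1 z1 u w x i1 Ly Lz Lx).
have sub2 : forall x, L2 x -> span2 y2 z2 x.
  move=> x; case: hL2 (P2L y2 Py2) (Q2L z2 Qz2) => u [w [_ ->]] Ly Lz Lx.
  exact: (@span2_in K V hK y2 z2 u w x i2 Ly Lz Lx).
have [a1 [b1 e1]] := sub1 v L1v.
have [a2 [b2 e2]] := sub2 v L2v.
have [ea eb] : a1 *: y1 = a2 *: y2 /\ b1 *: z1 = b2 *: z2.
  apply: (dist_uniq dFG.1 sF sG); try (apply: subspace_scale => //).
  by rewrite -e1 -e2.
have a1n : a1 != 0.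
  apply/eqP => a0; move/eqP: nv; apply; apply: dEG => //.
  rewrite e1 a0 scale0r add0r; exact: subspace_scale.
have b1n : b1 != 0.
  apply/eqP => b0; move/eqP: nv; apply; apply: dEF => //.
  rewrite e1 b0 scale0r addr0; exact: subspace_scale.
have L2y1 : L2 y1.
  have -> : y1 = a1^-1 *: (a2 *: y2) by rewrite -ea scalerA mulVr ?scale1r //; exact: hK.
  apply: subspace_scale => //; apply: subspace_scale => //; exact: P2L.
have L2z1 : L2 z1.
  have -> : z1 = b1^-1 *: (b2 *: z2) by rewrite -eb scalerA mulVr ?scale1r //; exact: hK.
  apply: subspace_scale => //; apply: subspace_scale => //; exact: Q2L.
move=> x /sub1; exact: span2_min sL2 L2y1 L2z1.
Qed.

Lemma part2 (K : unitRingType) (V : lmodType K) (hK : division_ring K)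
  (R : (V -> Prop) -> Prop) (hR : partial_regulus R) (E : V -> Prop) (hE : R E) L1 L2 :
  directrix R L1 -> directrix R L2 -> capS L1 E = capS L2 E -> L1 = L2.
Proof.
move=> d1 d2 e.
have hR' := hR.
case: hR' => _ _ [X1 [X2 [X3 [h1 h2 h3 [n12 n13 n23]]]]] _.
have [F [G [hF hG nFE nGE nFG]]] := two_others E h1 h2 h3 n12 n13 n23.
have [v [nv [L1v Ev] _]] := point_span1 (part1 hK hR hE d1).
have [L2v _] : capS L2 E v by rewrite -e.
apply: pred_ext => x; split.
- exact: (inj_half hK hR hE hF hG nFE nGE nFG d1 d2 nv L1v L2v Ev).
- exact: (inj_half hK hR hE hF hG nFE nGE nFG d2 d1 nv L2v L1v Ev).
Qed.

Lemma part3 (K : unitRingType) (V : lmodType K) (hK : division_ring K)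
  (R : (V -> Prop) -> Prop) (hR : partial_regulus R) (E : V -> Prop) (hE : R E) P :
  point P -> (forall x, P x -> E x) -> exists L, directrix R L /\ capS L E = P.
Proof.
move=> pP PE.
have hR' := hR.
case: hR' => hRG hdist [X1 [X2 [X3 [h1 h2 h3 [n12 n13 n23]]]]] hR2.
have [F [G [hF hG nFE nGE nFG]]] := two_others E h1 h2 h3 n12 n13 n23.
have sF := (hRG F hF).1; have sG := (hRG G hG).1; have sE := (hRG E hE).1.
have dFG := (hdist F G hF hG nFG).
have dEF := (hdist E F hE hF (nesym nFE)).1.
have dEG := (hdist E G hE hG (nesym nGE)).1.
have [v [nv Pv eP]] := point_span1 pP.
have Ev := PE v Pv.
have [f [g [Ff Gg ev]]] := dFG.2 v.
have nf : f != 0.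
  apply/eqP => f0; move/eqP: nv; apply; apply: dEG => //; by rewrite ev f0 add0r.
have ng : g != 0.
  apply/eqP => g0; move/eqP: nv; apply; apply: dEF => //; by rewrite ev g0 addr0.
have hi := indep_dist hK dFG.1 sF sG Ff Gg nf ng.
have hL : line (span2 f g) by exists f, g.
have mE : meets (span2 f g) E.
  exists P; split => // x; rewrite eP => -[a ->]; exists a, a; by rewrite ev scalerDr.
have mF : meets (span2 f g) F.
  exists (span1 f); split.
  - by exists f.
  - move=> x [a ->]; exists a, 0; by rewrite scale0r addr0.
  - move=> x; exact: span1_min.
have mG : meets (span2 f g) G.
  exists (span1 g); split.
  - by exists g.
  - move=> x [a ->]; exists 0, a; by rewrite scale0r add0r.
  - move=> x; exact: span1_min.
have dL : directrix R (span2 f g).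
  split => // X hX.
  exact: (hR2 _ hL E F G hE hF hG (nesym nFE) (nesym nGE) nFG mE mF mG X hX).
exists (span2 f g); split => //.
symmetry; apply: (point_sub_eq hK pP (part1 hK hR hE dL)).
move=> x Px; split; last exact: PE.
move: Px; rewrite eP => -[a ->]; exists a, a; by rewrite ev scalerDr.
Qed.

Theorem lemma4p3 (K : unitRingType) (V : lmodType K)
  (hK : division_ring K) (hdim : dim_gt2 V)
  (hG : exists X : V -> Prop, inG X)
  (R : (V -> Prop) -> Prop) (hR : partial_regulus R)
  (E : V -> Prop) (hE : R E) :
  [/\ (* L |-> L cap E maps directrices to points of E *)
      (forall L, directrix R L -> point (capS L E)),
      (* injective *)
      (forall L1 L2, directrix R L1 -> directrix R L2 ->
         capS L1 E = capS L2 E -> L1 = L2),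
      (* surjective onto the points of E *)
      (forall P, point P -> (forall x, P x -> E x) ->
         exists L, directrix R L /\ capS L E = P) &
      (* consequently each point of E lies on a unique directrix *)
      (forall P, point P -> (forall x, P x -> E x) ->
         exists L, [/\ directrix R L, (forall x, P x -> L x) &
           forall L', directrix R L' -> (forall x, P x -> L' x) -> L' = L])].
Proof.
split.
- move=> L dL; exact: (part1 hK hR hE dL).
- move=> L1 L2 d1 d2; exact: (part2 hK hR hE d1 d2).
- move=> P pP PE; exact: (part3 hK hR hE pP PE).
move=> P pP PE.
have [L [dL eL]] := part3 hK hR hE pP PE.
exists L; split => //.
  by move=> x Px; move: Px; rewrite -eL => -[].
move=> L' dL' PL'.
apply: (part2 hK hR hE dL' dL); rewrite eL.
symmetry; apply: (point_sub_eq hK pP (part1 hK hR hE dL')).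
by move=> x Px; split; [exact: PL' | exact: PE].
Qed.
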